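(* Let $\mathcal{E}$ be a finite-dimensional Euclidean space, $e\in\mathcal{E}$ nonzero, and let $C$ be a compact convex set contained in the hyperplane $H=\{x\in\mathcal{E}: \langle e,x\rangle=1\}$. If $C$ is amenable, then its conic hull $\mathcal{K}=\operatorname{cone}C=\{\lambda x: x\in C,\lambda\ge0\}$ is also amenable.
   Context: A face of a closed convex set $C$ is a closed convex subset $F\subseteq C$ such that whenever $x,y\in C$ and $\alpha x+(1-\alpha)y\in F$ for some $\alpha\in(0,1)$, then $x,y\in F$. A face $F$ of a closed convex set $C$ is amenable if for every bounded set $B$ there exists $\kappa>0$ such that $\operatorname{dist}(x,F)\le\kappa\operatorname{dist}(x,C)$ for all $x\in(\operatorname{aff}F)\cap B$; $C$ is amenable if all its faces are amenable. For a closed convex cone $\mathcal{K}$ this is equivalent to: for every face $\mathcal{F}$ there is $\kappa>0$ with $\operatorname{dist}(x,\mathcal{F})\le\kappa\operatorname{dist}(x,\mathcal{K})$ for all $x\in\operatorname{span}\mathcal{F}$. *)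

(* Defs.v *)
From HB Require Import structures.
From mathcomp Require Import all_boot all_order all_algebra.
From mathcomp Require Import all_classical all_reals all_analysis.
Set Implicit Arguments. Unset Strict Implicit. Unset Printing Implicit Defensive.
Import Order.TTheory GRing.Theory Num.Theory.
Import numFieldNormedType.Exports.
Local Open Scope classical_set_scope.
Local Open Scope ring_scope.

Definition dotv (R : realType) (n : nat) (x y : 'rV[R]_n) : R :=
  \sum_(i < n) x ord0 i * y ord0 i.

Definition enorm (R : realType) (n : nat) (x : 'rV[R]_n) : R :=
  Num.sqrt (dotv x x).

Definition dist (R : realType) (n : nat) (x : 'rV[R]_n) (S : set 'rV[R]_n) : R :=
  inf [set enorm (x - y) | y in S].

Definition convexS (R : realType) (n : nat) (S : set 'rV[R]_n) : Prop :=
  forall x y (t : R), S x -> S y -> 0 <= t -> t <= 1 -> S (t *: x + (1 - t) *: y).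

Definition bounded_set (R : realType) (n : nat) (B : set 'rV[R]_n) : Prop :=
  exists M : R, forall x, B x -> enorm x <= M.

Definition aff (R : realType) (n : nat) (S : set 'rV[R]_n) : set 'rV[R]_n :=
  [set x | exists (k : nat) (p : 'I_k -> 'rV[R]_n) (a : 'I_k -> R),
      (forall i, S (p i)) /\ \sum_(i < k) a i = 1 /\ x = \sum_(i < k) a i *: p i].

Definition is_face (R : realType) (n : nat) (C F : set 'rV[R]_n) : Prop :=
  closed F /\ convexS F /\ F `<=` C /\
  forall x y (a : R), C x -> C y -> 0 < a -> a < 1 ->
    F (a *: x + (1 - a) *: y) -> F x /\ F y.

Definition amenable_face (R : realType) (n : nat) (C F : set 'rV[R]_n) : Prop :=
  forall B : set 'rV[R]_n, bounded_set B ->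
    exists kappa : R, 0 < kappa /\
      forall x, aff F x -> B x -> dist x F <= kappa * dist x C.

Definition amenable (R : realType) (n : nat) (C : set 'rV[R]_n) : Prop :=
  forall F, is_face C F -> amenable_face C F.

Definition cone_hull (R : realType) (n : nat) (C : set 'rV[R]_n) : set 'rV[R]_n :=
  [set z | exists (l : R) (x : 'rV[R]_n), 0 <= l /\ C x /\ z = l *: x].

(* Main.v *)
Require Import Defs.
From HB Require Import structures.
From mathcomp Require Import all_boot all_order all_algebra.
From mathcomp Require Import all_classical all_reals all_analysis.
From mathcomp Require Import ring lra.
Set Implicit Arguments. Unset Strict Implicit. Unset Printing Implicit Defensive.
Import Order.TTheory GRing.Theory Num.Theory.
Import numFieldNormedType.Exports.
Local Open Scope classical_set_scope.
Local Open Scope ring_scope.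

Lemma dotvC (R : realType) n (x y : 'rV[R]_n) : dotv x y = dotv y x.
Proof. by rewrite /dotv; apply: eq_bigr => i _; rewrite mulrC. Qed.

Lemma dotvDr (R : realType) n (x y z : 'rV[R]_n) : dotv x (y + z) = dotv x y + dotv x z.
Proof. by rewrite /dotv -big_split; apply: eq_bigr => i _; rewrite mxE mulrDr. Qed.

Lemma dotvZr (R : realType) n (a : R) (x y : 'rV[R]_n) : dotv x (a *: y) = a * dotv x y.
Proof. by rewrite /dotv mulr_sumr; apply: eq_bigr => i _; rewrite mxE mulrCA. Qed.

Lemma dotvNr (R : realType) n (x y : 'rV[R]_n) : dotv x (- y) = - dotv x y.
Proof. by rewrite /dotv -sumrN; apply: eq_bigr => i _; rewrite mxE mulrN. Qed.

Lemma dotvBr (R : realType) n (x y z : 'rV[R]_n) : dotv x (y - z) = dotv x y - dotv x z.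
Proof. by rewrite dotvDr dotvNr. Qed.

Lemma dotv0r (R : realType) n (x : 'rV[R]_n) : dotv x 0 = 0.
Proof. by rewrite /dotv big1 // => i _; rewrite mxE mulr0. Qed.

Lemma dotv_sumr (R : realType) n (x : 'rV[R]_n) k (F : 'I_k -> 'rV[R]_n) :
  dotv x (\sum_(i < k) F i) = \sum_(i < k) dotv x (F i).
Proof.
elim/big_rec2: _ => [|i y1 y2 _ <-]; first exact: dotv0r.
by rewrite dotvDr.
Qed.

Lemma dotvv_ge0 (R : realType) n (x : 'rV[R]_n) : 0 <= dotv x x.
Proof. by rewrite /dotv; apply: sumr_ge0 => i _; rewrite -expr2 sqr_ge0. Qed.

Lemma dotv_quad (R : realType) n (x y : 'rV[R]_n) t :
  dotv (x - t *: y) (x - t *: y) = dotv x x - t * 2 * dotv x y + t ^+ 2 * dotv y y.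
Proof.
rewrite /dotv !mulr_sumr -sumrN -!big_split /=; apply: eq_bigr => i _.
rewrite !mxE; ring.
Qed.

Lemma quad_disc (R : realType) (a b c : R) : 0 <= c ->
  (forall t, 0 <= a - t * 2 * b + t ^+ 2 * c) -> b ^+ 2 <= a * c.
Proof.
move=> c0 H; have [c0'|ceq] := ltrP 0 c.
  have h := H (b / c).
  have e : a - b / c * 2 * b + (b / c) ^+ 2 * c = (a * c - b ^+ 2) / c.
    by field; rewrite gt_eqF.
  rewrite e in h; have := mulr_ge0 h (ltW c0'); rewrite divfK ?gt_eqF //.
  by rewrite subr_ge0.
have c00 : c = 0 by apply/eqP; rewrite eq_le ceq c0.
rewrite c00 mulr0; have [b0|bn0] := eqVneq b 0; first by rewrite b0 expr0n.
have := H ((a + 1) / (2 * b)).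
have -> : a - (a + 1) / (2 * b) * 2 * b + ((a + 1) / (2 * b)) ^+ 2 * c = -1.
  by rewrite c00 mulr0 addr0; field.
by rewrite ler0N1.
Qed.

Lemma CS (R : realType) n (x y : 'rV[R]_n) : dotv x y ^+ 2 <= dotv x x * dotv y y.
Proof.
apply: quad_disc; first exact: dotvv_ge0.
by move=> t; rewrite -dotv_quad; apply: dotvv_ge0.
Qed.

Lemma enorm_ge0 (R : realType) n (x : 'rV[R]_n) : 0 <= enorm x.
Proof. exact: sqrtr_ge0. Qed.

Lemma sqr_enorm (R : realType) n (x : 'rV[R]_n) : enorm x ^+ 2 = dotv x x.
Proof. by rewrite sqr_sqrtr // dotvv_ge0. Qed.

Lemma enorm_le (R : realType) n (x : 'rV[R]_n) a : 0 <= a -> dotv x x <= a ^+ 2 -> enorm x <= a.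
Proof.
move=> a0 h; rewrite -(ger0_norm a0) -sqrtr_sqr; exact: ler_wsqrtr.
Qed.

Lemma dotv_le (R : realType) n (x y : 'rV[R]_n) : `|dotv x y| <= enorm x * enorm y.
Proof.
rewrite -sqrtr_sqr /enorm -sqrtrM ?dotvv_ge0 //; apply: ler_wsqrtr; exact: CS.
Qed.

Lemma enormD (R : realType) n (x y : 'rV[R]_n) : enorm (x + y) <= enorm x + enorm y.
Proof.
apply: enorm_le; first by rewrite addr_ge0 ?enorm_ge0.
rewrite dotvDr !(dotvC (x + y)) !dotvDr (dotvC y x).
have h := dotv_le x y; have h2 := ler_norm (dotv x y).
rewrite sqrrD !sqr_enorm; lra.
Qed.

Lemma enormZ (R : realType) n (t : R) (x : 'rV[R]_n) : enorm (t *: x) = `|t| * enorm x.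
Proof.
rewrite /enorm dotvZr dotvC dotvZr mulrA -expr2 sqrtrM ?sqr_ge0 // sqrtr_sqr.
by [].
Qed.

Lemma enormN (R : realType) n (x : 'rV[R]_n) : enorm (- x) = enorm x.
Proof. by rewrite -scaleN1r enormZ normrN normr1 mul1r. Qed.

Lemma enormB (R : realType) n (x y : 'rV[R]_n) : enorm (x - y) = enorm (y - x).
Proof. by rewrite -enormN opprB. Qed.

Lemma enorm0 (R : realType) n : enorm (0 : 'rV[R]_n) = 0.
Proof. by rewrite /enorm dotv0r sqrtr0. Qed.

Lemma dist_ge0 (R : realType) n (x : 'rV[R]_n) S : 0 <= dist x S.
Proof.
rewrite /dist; set E := [set _ | _ in _].
have [->|/set0P ne] := eqVneq E set0; first by rewrite inf0.
by apply: lb_le_inf => // _ [y _ <-]; apply: enorm_ge0.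
Qed.

Lemma dist_le (R : realType) n (x : 'rV[R]_n) (S : set 'rV[R]_n) y : S y -> dist x S <= enorm (x - y).
Proof.
move=> Sy; apply: ge_inf; last by exists y.
by exists 0 => _ [z _ <-]; apply: enorm_ge0.
Qed.

Lemma dist_approx (R : realType) n (x : 'rV[R]_n) (S : set 'rV[R]_n) (eps : R) :
  0 < eps -> S !=set0 -> exists y, S y /\ enorm (x - y) < dist x S + eps.
Proof.
move=> e0 [y0 Sy0].
have hi : has_inf [set enorm (x - y) | y in S].
  split; first by exists (enorm (x - y0)), y0.
  by exists 0 => _ [z _ <-]; apply: enorm_ge0.
have [_ [y Sy <-] h] := inf_adherent e0 hi.
by exists y.
Qed.

Lemma K_scale (R : realType) n (C : set 'rV[R]_n) z mu :
  cone_hull C z -> 0 <= mu -> cone_hull C (mu *: z).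
Proof.
move=> [l [c [l0 [Cc ->]]]] mu0; exists (mu * l), c; split; first exact: mulr_ge0.
by split=> //; rewrite scalerA.
Qed.

Lemma K_of_C (R : realType) n (C : set 'rV[R]_n) c : C c -> cone_hull C c.
Proof. by move=> Cc; exists 1, c; rewrite scale1r. Qed.

Lemma K0 (R : realType) n (C : set 'rV[R]_n) z : cone_hull C z -> cone_hull C 0.
Proof. by move=> [l [c [_ [Cc _]]]]; exists 0, c; rewrite scale0r. Qed.

Lemma face0 (R : realType) n (C G : set 'rV[R]_n) g :
  is_face (cone_hull C) G -> G g -> G 0.
Proof.
move=> [_ [_ [sGK hf]]] Gg.
have K2 : cone_hull C (2 *: g) := K_scale (sGK _ Gg) (ler0n _ 2).
have K0' := K0 (sGK _ Gg).
have h : 2^-1 *: (2 *: g) + (1 - 2^-1) *: 0 = g.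
  by rewrite scaler0 addr0 scalerA mulVf ?pnatr_eq0 // scale1r.
have [] := hf (2 *: g) 0 (2^-1) K2 K0' _ _ _ => //.
- by rewrite invf_lt1 ?ltr0n // ltr1n.
- by rewrite h.
Qed.

Lemma face_scale (R : realType) n (C G : set 'rV[R]_n) z mu :
  is_face (cone_hull C) G -> G 0 -> G z -> 0 <= mu -> G (mu *: z).
Proof.
move=> [_ [hconv [sGK hf]]] G0 Gz mu0.
have [mu1|mu1] := lerP mu 1.
  by have := hconv z 0 mu Gz G0 mu0 mu1; rewrite scaler0 addr0.
have mup : 0 < mu by apply: lt_trans mu1.
have [] := hf (mu *: z) 0 (mu^-1) (K_scale (sGK _ Gz) mu0) (K0 (sGK _ Gz)) _ _ _ => //.
- by rewrite invr_gt0.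
- by rewrite invf_lt1.
- by rewrite scaler0 addr0 scalerA mulVf ?gt_eqF // scale1r.
Qed.

Lemma face_rep (R : realType) n (C G : set 'rV[R]_n) g :
  is_face (cone_hull C) G -> G g ->
  g = 0 \/ exists l f, 0 < l /\ G f /\ C f /\ g = l *: f.
Proof.
move=> hG Gg; have G0 := face0 hG Gg.
have [_ [_ [sGK _]]] := hG.
have [l [c [l0 [Cc gE]]]] := sGK _ Gg.
have [le0|lp] := eqVneq l 0; first by left; rewrite gE le0 scale0r.
right; exists l, c; split; first by rewrite lt_neqAle eq_sym lp.
split=> //.
have -> : c = l^-1 *: g by rewrite gE scalerA mulVf // scale1r.
by apply: (face_scale hG) => //; rewrite invr_ge0.
Qed.

Lemma faceF (R : realType) n (C G : set 'rV[R]_n) :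
  compact C -> convexS C -> is_face (cone_hull C) G -> is_face C (G `&` C).
Proof.
move=> cC convC [clG [convG [sGK hf]]]; split.
  by apply: closedI => //; apply: compact_closed => //; exact: norm_hausdorff.
split.
  by move=> x y t [Gx Cx] [Gy Cy] t0 t1; split; [exact: convG | exact: convC].
split; first by move=> x [].
move=> x y a Cx Cy a0 a1 [Gz _].
by have [Gx Gy] := hf x y a (K_of_C Cx) (K_of_C Cy) a0 a1 Gz.
Qed.

Lemma aff_ext (R : realType) n (F : set 'rV[R]_n) k (f : 'I_k -> 'rV[R]_n) (b : 'I_k -> R) p c :
  (forall i, F (f i)) -> F p -> \sum_(i < k) b i + c = 1 ->
  aff F (\sum_(i < k) b i *: f i + c *: p).
Proof.
move=> Ff Fp hs.
exists (k + 1)%N, (fun i => match fintype.split i with inl j => f j | inr _ => p end),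
  (fun i => match fintype.split i with inl j => b j | inr _ => c end).
have hl : forall i : 'I_k, fintype.split (lshift 1 i) = inl i := fun i => unsplitK (inl _ i).
have hr : forall i : 'I_1, fintype.split (rshift k i) = inr i := fun i => unsplitK (inr _ i).
split; first by move=> i; case: (fintype.split i).
rewrite !big_split_ord /= !big_ord1 !hr; split.
  by under eq_bigr => i _ do rewrite hl.
by under [in RHS]eq_bigr => i _ do rewrite hl.
Qed.

Lemma le_eps (R : realType) (a b c r : R) : 0 < r -> 0 <= c ->
  (forall eps, 0 < eps -> eps <= r -> a <= b + c * eps) -> a <= b.
Proof.
move=> r0 c0 H; apply/ler_addgt0Pr => e e0.
have c1 : 0 < c + 1 by lra.
pose eps := Num.min r (e / (c + 1)).
have eps0 : 0 < eps by rewrite lt_min r0 divr_gt0.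
have h1 : eps <= e / (c + 1) by rewrite ge_min lexx orbT.
have h0 : eps <= r by rewrite ge_min lexx.
have h2 : (c + 1) * eps <= e.
  have := ler_wpM2l (ltW c1) h1.
  have -> : (c + 1) * (e / (c + 1)) = e by field; rewrite gt_eqF.
  by [].
have := H eps eps0 h0; rewrite mulrDl mul1r in h2; lra.
Qed.

Lemma main_ineq (R : realType) n (e : 'rV[R]_n) (C G : set 'rV[R]_n) (M kap : R) (x : 'rV[R]_n) :
  C `<=` [set x | dotv e x = 1] ->
  1 <= M -> (forall c, C c -> enorm c <= M) ->
  is_face (cone_hull C) G -> 0 < kap ->
  (forall y, aff (G `&` C) y -> enorm y <= 2 * M * (1 + 2 * enorm e * M) ->
     dist y (G `&` C) <= kap * dist y C) ->
  aff G x ->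
  dist x G <= Num.max 2 (enorm e * M + kap * (1 + enorm e * M)) * dist x (cone_hull C).
Proof.
move=> hC M1 hM hG kap0 hkap hx.
set K := cone_hull C. set F := G `&` C. set E := enorm e.
set kappa := Num.max _ _.
have kappa2 : 2 <= kappa by rewrite le_max lexx.
have kappa1 : E * M + kap * (1 + E * M) <= kappa by rewrite le_max lexx orbT.
have E0 : 0 <= E := enorm_ge0 e.
have [k [pts [a [Gp [sa xE]]]]] := hx.
have G0 : G 0.
  case: k pts a Gp sa xE => [|k] pts a Gp sa xE.
    by move: sa; rewrite big_ord0 => /esym/eqP; rewrite oner_eq0.
  exact: face0 hG (Gp ord0).
have K0' : K 0 := hG.2.2.1 _ G0.
have d0 : 0 <= dist x K := dist_ge0 _ _.
have dr : dist x K <= enorm x by have := dist_le x K0'; rewrite subr0.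
have r0 := enorm_ge0 x.
have [rz|rpos] : enorm x = 0 \/ 0 < enorm x.
  by move: r0; rewrite le_eqVlt => /orP[/eqP<-|]; [left|right].
  have := dist_le x G0; rewrite subr0 rz => h; apply: le_trans h _.
  by apply: mulr_ge0 => //; apply: le_trans kappa2.
have [[p0 Fp0]|nF] := pselect (exists p, F p); last first.
  exfalso; suff x0 : x = 0 by move: rpos; rewrite x0 enorm0 ltxx.
  rewrite xE big1 // => i _.
  have [->|[l [f [_ [Gf [Cf _]]]]]] := face_rep hG (Gp i); first by rewrite scaler0.
  by case: nF; exists f.
have hrep : forall i, exists lf : R * 'rV[R]_n, 0 <= lf.1 /\ F lf.2 /\ pts i = lf.1 *: lf.2.
  move=> i; have [p0E|[l [f [lp [Gf [Cf pE]]]]]] := face_rep hG (Gp i).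
    by exists (0, p0); rewrite /= scale0r p0E.
  by exists (l, f); split; [exact: ltW | split].
have [lf hlf] := choice hrep.
have xE' : x = \sum_(i < k) (a i * (lf i).1) *: (lf i).2.
  rewrite xE; apply: eq_bigr => i _; have [_ [_ ->]] := hlf i; by rewrite scalerA.
have FH : forall f, F f -> dotv e f = 1 by move=> f [_ Cf]; exact: hC.
have tE : dotv e x = \sum_(i < k) a i * (lf i).1.
  rewrite xE' dotv_sumr; apply: eq_bigr => i _; have [_ [Ff _]] := hlf i.
  by rewrite dotvZr FH // mulr1.
set r := enorm x.
apply: (le_eps (c := kappa + 1) (r := r)) => //; first by lra.
move=> eps eps0 epsr.
set d := dist x K.
have [k0 [Kk0 hk0]] := dist_approx x eps0 (ex_intro _ 0 K0').
have {}hk0 : enorm (x - k0) < (d + eps) := hk0.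
have [s [c [s0 [Cc k0E]]]] := Kk0.
have cM := hM c Cc.
have c0 : 0 <= enorm c := enorm_ge0 c.
have hdd : (d + eps) <= 2 * r by have dr' : d <= r := dr; lra.
have [sA|sB] := ltrP (s * M) (r / 2).
  have hk : enorm k0 <= s * M.
    by rewrite k0E enormZ ger0_norm // ler_wpM2l.
  have tri : r <= enorm (x - k0) + enorm k0.
    by have := enormD (x - k0) k0; rewrite subrK.
  have := dist_le x G0; rewrite subr0 -/r => h.
  apply: le_trans h _.
  have h3 : 2 * (d + eps) <= kappa * (d + eps) by apply: ler_wpM2r; lra.
  rewrite mulrDr in h3; rewrite mulrDl mul1r; lra.
have sp : 0 < s.
  rewrite lt_neqAle s0 andbT; apply/eqP => s00; move: sB; rewrite -s00 mul0r; lra.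
set t := dotv e x.
have sinv0 : 0 <= s^-1 by rewrite invr_ge0 ltW.
have sle : 0 <= s by exact: ltW.
have sE : dotv e k0 = s by rewrite k0E dotvZr hC // mulr1.
have hst : `|s - t| <= E * (d + eps).
  rewrite -sE /t -dotvBr; apply: le_trans (dotv_le e (k0 - x)) _.
  by rewrite enormB ler_wpM2l // ltW.
set u := x + (s - t) *: p0.
have p0M : enorm p0 <= M by apply: hM; case: Fp0.
have hux : enorm (u - x) <= E * M * (d + eps).
  rewrite /u addrAC subrr add0r enormZ.
  apply: le_trans (ler_pM (normr_ge0 _) (enorm_ge0 _) hst p0M) _.
  by rewrite mulrAC.
have affu : aff F (s^-1 *: u).
  have -> : s^-1 *: u = \sum_(i < k) (s^-1 * (a i * (lf i).1)) *: (lf i).2 + (s^-1 * (s - t)) *: p0.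
    rewrite /u {1}xE' scalerDr scaler_sumr; congr (_ + _); last by rewrite scalerA.
    by apply: eq_bigr => i _; rewrite scalerA.
  apply: aff_ext => //; first by move=> i; have [_ [? _]] := hlf i.
  by rewrite -mulr_sumr -mulrDr -tE -/t addrCA subrr addr0 mulVf ?gt_eqF.
have hu : enorm u <= r * (1 + 2 * E * M).
  have := enormD x (u - x); rewrite addrC subrK => h.
  have h2 : E * M * (d + eps) <= E * M * (2 * r) by apply: ler_wpM2l => //; apply: mulr_ge0; lra.
  have h3 : E * M * (2 * r) = r * (2 * E * M) by ring.
  rewrite -/r in h; rewrite mulrDr mulr1; lra.
have hus : enorm (s^-1 *: u) <= 2 * M * (1 + 2 * E * M).
  rewrite enormZ ger0_norm // (mulrC s^-1) ler_pdivrMr //.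
  have h1 : r <= 2 * M * s.
    have -> : 2 * M * s = 2 * (s * M) by ring.
    lra.
  have EM0 : 0 <= E * M by apply: mulr_ge0; lra.
  have h2 : r * (1 + 2 * E * M) <= (2 * M * s) * (1 + 2 * E * M).
    apply: ler_wpM2r => //.
    have -> : 1 + 2 * E * M = 1 + 2 * (E * M) by ring.
    lra.
  have h3 : (2 * M * s) * (1 + 2 * E * M) = 2 * M * (1 + 2 * E * M) * s by ring.
  lra.
have hdC : dist (s^-1 *: u) C <= s^-1 * ((E * M + 1) * (d + eps)).
  apply: le_trans (dist_le _ Cc) _.
  have -> : s^-1 *: u - c = s^-1 *: (u - k0).
    by rewrite k0E scalerBr scalerA mulVf ?gt_eqF // scale1r.
  rewrite enormZ ger0_norm // ler_wpM2l //.
  have := enormD (u - x) (x - k0); rewrite addrA subrK => h.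
  rewrite mulrDl mul1r; lra.
have hdF := hkap _ affu hus.
have [f [Ff hf]] := dist_approx (s^-1 *: u) (divr_gt0 eps0 sp) (ex_intro _ p0 Fp0).
have Gsf : G (s *: f) by apply: (face_scale hG G0 Ff.1); exact: ltW.
have h1 := dist_le x Gsf.
have h2 : enorm (x - s *: f) <= enorm (x - u) + enorm (u - s *: f).
  by have := enormD (x - u) (u - s *: f); rewrite addrA subrK.
have h3 : enorm (u - s *: f) = s * enorm (s^-1 *: u - f).
  have -> : u - s *: f = s *: (s^-1 *: u - f).
    by rewrite scalerBr scalerA mulfV ?gt_eqF // scale1r.
  by rewrite enormZ ger0_norm.
have h4 : s * enorm (s^-1 *: u - f) <= kap * ((E * M + 1) * (d + eps)) + eps.
  have h5 : enorm (s^-1 *: u - f) <= s^-1 * (kap * ((E * M + 1) * (d + eps)) + eps).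
    rewrite mulrDr (mulrC s^-1 eps).
    have e1 : kap * dist (s^-1 *: u) C <= kap * (s^-1 * ((E * M + 1) * (d + eps))).
      apply: ler_wpM2l; [exact: ltW | exact: hdC].
    have e2 : s^-1 * (kap * ((E * M + 1) * (d + eps))) = kap * (s^-1 * ((E * M + 1) * (d + eps))).
      by rewrite mulrCA.
    lra.
  by have := ler_wpM2l (ltW sp) h5; rewrite mulVKf ?gt_eqF.
have hxu : enorm (x - u) = enorm (u - x) by rewrite enormB.
have h6 : (E * M + kap * (1 + E * M)) * (d + eps) <= kappa * (d + eps).
  by apply: ler_wpM2r => //; lra.
have h7 : E * M * (d + eps) + kap * ((E * M + 1) * (d + eps)) = (E * M + kap * (1 + E * M)) * (d + eps) by ring.
rewrite mulrDr in h6; rewrite mulrDl mul1r; lra.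
Qed.

Unset Implicit Arguments.

Theorem theorem4p5 (R : realType) (n : nat) (e : 'rV[R]_n) (C : set 'rV[R]_n) :
  e != 0 ->
  compact C -> convexS C ->
  C `<=` [set x | dotv e x = 1] ->
  amenable C ->
  amenable (cone_hull C).
Proof.
move=> e0 cC convC hC amC G hG B _.
have [M0 [_ hM0]] := compact_bounded cC.
have hb := hM0 (M0 + 1) ltac:(by rewrite ltrDl).
set N := `|M0 + 1|.
have entry : forall c, C c -> forall i, `|c ord0 i| <= N.
  move=> c Cc i; apply: le_trans (ler_norm (M0 + 1)); apply: le_trans (hb c Cc).
  rewrite (_ : `|c| = mx_norm c) // mx_normrE; apply/bigmax_geP; right; by exists (ord0, i).
set M := 1 + Num.sqrt (n%:R * N ^+ 2).
have hM : forall c, C c -> enorm c <= M.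
  move=> c Cc; apply: (@le_trans _ _ (Num.sqrt (n%:R * N ^+ 2))); last by rewrite lerDr.
  apply: ler_wsqrtr; rewrite /dotv.
  have h : \sum_(i < n) c ord0 i * c ord0 i <= \sum_(i < n) N ^+ 2.
    apply: ler_sum => i _; apply: le_trans (ler_norm _) _.
    by rewrite normrM expr2; apply: ler_pM => //; exact: entry.
  by move: h; rewrite sumr_const card_ord mulr_natl.
have M1 : 1 <= M by rewrite /M lerDl sqrtr_ge0.
have bB : Defs.bounded_set [set y : 'rV[R]_n | enorm y <= 2 * M * (1 + 2 * enorm e * M)].
  by exists (2 * M * (1 + 2 * enorm e * M)) => y.
have [kap [kap0 hkap]] := amC _ (faceF cC convC hG) _ bB.
exists (Num.max 2 (enorm e * M + kap * (1 + enorm e * M))); split.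
  by rewrite lt_max ltr0n.
move=> x hx _; apply: main_ineq => //.
Qed.
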